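(* For the operator $A\colon c_c\to c_c$, $(Ax)_1=x_1$, $(Ax)_n=x_n-x_{n-1}$ ($n>1$), with adjoint $A^*\colon\ell^2\to\ell^2$, we have $$\partial(f\circ A)(0)=\{0\}\neq\emptyset=A^*\,\partial f(A0).$$
   Context: Let $c_c$ be the space of finitely supported real sequences with the $\ell^2$-norm; its dual is identified with $\ell^2$ via $\langle z,y\rangle=\sum_n z_ny_n$. Let $f\colon c_c\to\mathbb{R}$, $f(x)=\sum_{n=1}^\infty \frac{n^2}{2}(x_n-n^{-2})^2$. For convex $h\colon c_c\to(-\infty,\infty]$ and $x$ with $h(x)<\infty$, $\partial h(x)=\{z\in\ell^2:\forall y\in c_c:\ h(y)\ge h(x)+\langle z,y-x\rangle\}$. The adjoint $A^*\colon\ell^2\to\ell^2$ is defined by $\langle A^*z,x\rangle=\langle z,Ax\rangle$ for all $z\in\ell^2$, $x\in c_c$. *)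

(* Defs.v *)
From Stdlib Require Import Reals.
From Coquelicot Require Import Coquelicot.
Open Scope R_scope.

(* Sequences are nat -> R; index k stands for the paper's index n = k+1. *)
Definition seqR := nat -> R.

Definition cc (x : seqR) : Prop := exists N : nat, forall k, (N <= k)%nat -> x k = 0.

Definition ell2 (z : seqR) : Prop := ex_series (fun k => (z k) ^ 2).

Definition pairing (z y : seqR) : R := Series (fun k => z k * y k).

Definition zeroseq : seqR := fun _ => 0.
Definition seq_sub (x y : seqR) : seqR := fun k => x k - y k.

Definition fobj (x : seqR) : R :=
  Series (fun k => (INR (S k))^2 / 2 * (x k - / (INR (S k))^2) ^ 2).

Definition opA (x : seqR) : seqR :=
  fun k => match k with O => x O | S j => x (S j) - x j end.

Definition subdiff (h : seqR -> R) (x : seqR) (z : seqR) : Prop :=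
  ell2 z /\ forall y, cc y -> h y >= h x + pairing z (seq_sub y x).

Definition is_adjoint_image (z w : seqR) : Prop :=
  ell2 w /\ forall x, cc x -> pairing w x = pairing z (opA x).

Definition adjoint_image (S : seqR -> Prop) (w : seqR) : Prop :=
  exists z, S z /\ ell2 z /\ is_adjoint_image z w.

(* Main.v *)
Require Import Defs.
From Stdlib Require Import Reals Lra Lia FunctionalExtensionality.
From Coquelicot Require Import Coquelicot.
Open Scope R_scope.

Ltac toR := match goal with |- ?x = ?y => change (@eq R x y) end.

Lemma sum_n_S (a : nat -> R) n : sum_n a (S n) = sum_n a n + a (S n).
Proof. rewrite sum_Sn. reflexivity. Qed.

Lemma is_series_fin (a : nat -> R) M :
  (forall k, (M < k)%nat -> a k = 0) -> is_series a (sum_n a M).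
Proof.
  intros H.
  assert (E : forall j, sum_n a (M + j) = sum_n a M).
  { induction j. now rewrite Nat.add_0_r.
    rewrite Nat.add_succ_r, sum_n_S, IHj. rewrite H by lia. apply Rplus_0_r. }
  assert (L : is_lim_seq (sum_n a) (sum_n a M)).
  { apply is_lim_seq_ext_loc with (fun _ => sum_n a M).
    exists M. intros n Hn. replace n with (M + (n - M))%nat by lia. now rewrite E.
    apply is_lim_seq_const. }
  exact L.
Qed.

Lemma Series_fin (a : nat -> R) M :
  (forall k, (M < k)%nat -> a k = 0) -> Series a = sum_n a M.
Proof. intros H. apply is_series_unique, is_series_fin, H. Qed.

Lemma ex_series_fin (a : nat -> R) M :
  (forall k, (M < k)%nat -> a k = 0) -> ex_series a.
Proof. intros H. eexists. apply (is_series_fin a M H). Qed.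

Lemma sum_n_zero (a : nat -> R) M : (forall j, (j <= M)%nat -> a j = 0) -> sum_n a M = 0.
Proof.
  induction M; intros H. rewrite sum_O. apply H; lia.
  rewrite sum_n_S, IHM. rewrite H by lia. apply Rplus_0_r. intros; apply H; lia.
Qed.

Lemma sum_n_single (a : nat -> R) k M : (forall j, j <> k -> a j = 0) -> (k <= M)%nat ->
  sum_n a M = a k.
Proof.
  intros H. induction M; intros HM.
  - rewrite sum_O. now replace k with 0%nat by lia.
  - destruct (Nat.eq_dec k (S M)).
    + subst. rewrite sum_n_S, sum_n_zero. apply Rplus_0_l. intros; apply H; lia.
    + rewrite sum_n_S, IHM by lia. rewrite (H (S M)) by lia. apply Rplus_0_r.
Qed.

Definition gb (k : nat) : R := / (2 * (INR (S k))^2).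

Lemma ex_gb : ex_series gb.
Proof.
  set (b := fun k : nat => / INR (S k) - / INR (S (S k))).
  assert (Sb : forall n, sum_n b n = 1 - / INR (S (S n))).
  { induction n. rewrite sum_O. unfold b. toR. simpl. field.
    rewrite sum_n_S, IHn. unfold b. toR. ring. }
  assert (Eb : ex_series b).
  { exists 1. unfold is_series.
    assert (L : is_lim_seq (sum_n b) 1).
    { apply is_lim_seq_ext with (fun n => 1 - / INR (S (S n))). intros; now rewrite Sb.
      replace (Finite 1) with (Finite (1 - 0)) by (f_equal; ring).
      apply is_lim_seq_minus'. apply is_lim_seq_const.
      assert (I : is_lim_seq (fun n => INR (S (S n))) p_infty).
      { apply (proj1 (is_lim_seq_incr_1 (fun n => INR (S n)) _)). apply (proj1 (is_lim_seq_incr_1 INR _)). apply is_lim_seq_INR. }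
      apply (is_lim_seq_inv _ _ I). discriminate. }
    exact L. }
  apply (@ex_series_le R_AbsRing R_CompleteNormedModule gb b); [|exact Eb].
  intros n. unfold gb, b.
  assert (P : 1 <= INR (S n)) by (apply (le_INR 1); lia).
  rewrite S_INR with (n := S n).
  set (x := INR (S n)) in *.
  change (Rabs (/ (2 * x ^ 2)) <= / x - / (x + 1)).
  rewrite Rabs_right by (apply Rle_ge, Rlt_le, Rinv_0_lt_compat; nra).
  replace (/ x - / (x+1)) with (/ (x * (x+1))) by (field; lra).
  apply Rinv_le_contravar; nra.
Qed.

Definition cw (k : nat) : R := INR (S k) ^ 2 / 2.

Lemma fobj_fin x M : (forall k, (M < k)%nat -> x k = 0) ->
  fobj x = Series gb + sum_n (fun k => cw k * x k ^ 2 - x k) M.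
Proof.
  intros H. unfold fobj.
  rewrite (Series_ext _ (fun k => gb k + (cw k * x k ^ 2 - x k))).
  2:{ intros n. unfold gb, cw. assert (0 < INR (S n)) by (apply lt_0_INR; lia). field. lra. }
  rewrite Series_plus. 2: apply ex_gb.
  2:{ apply (ex_series_fin _ M). intros k Hk. rewrite H by exact Hk. ring. }
  f_equal. apply Series_fin. intros k Hk. rewrite H by exact Hk. ring.
Qed.

Lemma opA_zero j : opA zeroseq j = 0.
Proof. destruct j; simpl; unfold zeroseq; ring. Qed.

Lemma fobj_A0 : fobj (opA zeroseq) = Series gb.
Proof.
  rewrite (fobj_fin _ 0). 2:{ intros; apply opA_zero. }
  rewrite sum_O, opA_zero. toR. ring.
Qed.

Lemma sum_n_single' (a : nat -> R) k : (forall j, (j < k)%nat -> a j = 0) -> sum_n a k = a k.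
Proof.
  intros H. destruct k. apply sum_O.
  rewrite sum_n_S, sum_n_zero. apply Rplus_0_l. intros; apply H; lia.
Qed.

Lemma quad (C a : R) : 0 < C -> (forall t, C * t ^ 2 >= a * t) -> a = 0.
Proof.
  intros HC H. specialize (H (a / (2 * C))).
  assert (E : C * (a / (2 * C)) = a / 2) by (field; lra).
  assert (H2 : a / 2 * (a / (2 * C)) >= a * (a / (2 * C))).
  { replace (a / 2 * (a / (2 * C))) with (C * (a / (2 * C)) ^ 2). exact H.
    rewrite <- E. ring. }
  assert (H3 : a * (a / (2 * C)) <= 0) by lra.
  assert (H4 : a * a <= 0).
  { replace (a * a) with (2 * C * (a * (a / (2 * C)))) by (field; lra). nra. }
  nra.
Qed.

Definition ek (k : nat) (t : R) : seqR := fun j => if Nat.eq_dec j k then t else 0.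

Lemma ek_k k t : ek k t k = t.
Proof. unfold ek. destruct (Nat.eq_dec k k); congruence. Qed.
Lemma ek_j k t j : j <> k -> ek k t j = 0.
Proof. unfold ek. destruct (Nat.eq_dec j k); congruence. Qed.

Lemma ek_cc k t : cc (ek k t).
Proof. exists (S k). intros; apply ek_j; lia. Qed.

Lemma pairing_ek z k t x : (forall j, x j = 0) -> pairing z (seq_sub (ek k t) x) = z k * t.
Proof.
  intros Hx. unfold pairing, seq_sub.
  rewrite (Series_fin _ k). 2:{ intros j Hj. rewrite ek_j, Hx by lia. ring. }
  rewrite (sum_n_single _ k k). rewrite ek_k, Hx. ring.
  intros j Hj. rewrite ek_j, Hx by lia. ring. lia.
Qed.

Lemma cw_pos k : 0 < cw k.
Proof. unfold cw. assert (0 < INR (S k)) by (apply lt_0_INR; lia). nra. Qed.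

Lemma partA_sum (y : seqR) M :
  sum_n (fun k => cw k * opA y k ^ 2 - opA y k) M >= - y M.
Proof.
  induction M.
  - rewrite sum_O. simpl. pose proof (cw_pos 0). nra.
  - rewrite sum_n_S. simpl. pose proof (cw_pos (S M)).
    simpl in IHM. assert (0 <= cw (S M) * ((y (S M) - y M) * ((y (S M) - y M) * 1))) by (apply Rmult_le_pos; [lra| rewrite Rmult_1_r; apply Rle_0_sqr]). revert IHM. generalize (sum_n (fun k : nat => cw k * (opA y k * (opA y k * 1)) - opA y k) M). intros. lra.
Qed.

Theorem mainTheorem11 :
  (forall z : seqR, subdiff (fun x => fobj (opA x)) zeroseq z <-> z = zeroseq)
  /\ (forall w : seqR, ~ adjoint_image (subdiff fobj (opA zeroseq)) w)
  /\ (exists z : seqR, subdiff (fun x => fobj (opA x)) zeroseq z).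
Proof.
  assert (P0 : subdiff (fun x => fobj (opA x)) zeroseq zeroseq).
  { split.
    - apply (ex_series_fin _ 0). intros; unfold zeroseq; cbv beta; ring.
    - intros y [N HN]. rewrite fobj_A0.
      unfold pairing. rewrite (Series_fin (fun k => zeroseq k * seq_sub y zeroseq k) 0). 2:{ intros; unfold zeroseq; cbv beta; apply Rmult_0_l. }
      rewrite sum_O. unfold zeroseq at 1.
      rewrite (fobj_fin _ N).
      2:{ intros k Hk. destruct k. lia. simpl. rewrite !HN by lia. ring. }
      pose proof (partA_sum y N). rewrite (HN N) in H by lia. lra. }
  split; [|split].
  - intros z. split; [|intros ->; exact P0].
    intros [Hz H]. apply functional_extensionality. intros k. unfold zeroseq.
    apply (quad (cw k + cw (S k))). pose proof (cw_pos k); pose proof (cw_pos (S k)); lra.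
    intros t. specialize (H (ek k t) (ek_cc k t)).
    rewrite fobj_A0, pairing_ek in H by (intros; reflexivity).
    rewrite (fobj_fin _ (S k)) in H.
    2:{ intros j Hj. destruct j. lia. simpl. rewrite !ek_j by lia. ring. }
    rewrite sum_n_S, sum_n_single' in H.
    2:{ intros j Hj. destruct j; simpl.
        - rewrite ek_j by lia. ring.
        - rewrite !ek_j by lia. ring. }
    replace (opA (ek k t) (S k)) with (- t) in H by (simpl; rewrite ek_k, ek_j by lia; ring).
    replace (opA (ek k t) k) with t in H.
    2:{ destruct k; simpl. now rewrite ek_k. rewrite ek_k, ek_j by lia. ring. }
    simpl in H. lra.
  - intros w [z [[Hz H] _]].
    assert (Zk : forall k, z k = -1).
    { intros k. assert (z k + 1 = 0); [|lra].
      apply (quad (cw k)). apply cw_pos.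
      intros t. specialize (H (ek k t) (ek_cc k t)).
      rewrite fobj_A0, pairing_ek in H by apply opA_zero.
      rewrite (fobj_fin _ k) in H by (intros; apply ek_j; lia).
      rewrite sum_n_single' in H by (intros; rewrite ek_j by lia; ring).
      rewrite ek_k in H. simpl in H. lra. }
    apply ex_series_lim_0 in Hz.
    apply is_lim_seq_ext with (v := fun _ => 1) in Hz.
    2:{ intros n. rewrite Zk. ring. }
    apply is_lim_seq_unique in Hz. rewrite Lim_seq_const in Hz.
    injection Hz. lra.
  - exists zeroseq. exact P0.
Qed.
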